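(* Let $\Omega\subset\mathbb R^N$ be open and let $T:\Omega\to\mathbb R$ be continuous and such that $\mathrm{epi}(T)$ has locally positive reach. Let $\bar x\in\Omega$. Then $T$ is non-Lipschitz at $\bar x$ if and only if there exists a nonzero vector $\zeta\in\mathbb R^N$ such that $(\zeta,0)\in N_{\mathrm{epi}(T)}(\bar x,T(\bar x))$.
   Context: $\mathrm{epi}(T)=\{(x,y)\in\Omega\times\mathbb R: y\ge T(x)\}$. For a closed set $K$ and $z\in K$, $v\in N_K(z)$ (proximal normal cone) iff there is $\sigma\ge0$ with $\langle v,w-z\rangle\le\sigma\|w-z\|^2$ for all $w\in K$. A locally closed set $K$ has locally positive reach if there is a continuous $\varphi:K\to[0,\infty)$ with $\langle v,w-z\rangle\le\varphi(z)\|v\|\|w-z\|^2$ for all $z,w\in K$ and $v\in N_K(z)$. $T$ is non-Lipschitz at $x$ if there exist sequences $x_i\to x$, $y_i\to x$ with $x_i\neq y_i$ and $\limsup_{i\to\infty}|T(y_i)-T(x_i)|/\|y_i-x_i\|=+\infty$. *)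

(* Defs.v *)
From HB Require Import structures.
From mathcomp Require Import all_boot all_order all_algebra.
From mathcomp Require Import all_classical all_reals all_analysis.
Set Implicit Arguments. Unset Strict Implicit. Unset Printing Implicit Defensive.
Import Order.TTheory GRing.Theory Num.Theory.
Import numFieldNormedType.Exports.
Local Open Scope classical_set_scope.
Local Open Scope ring_scope.

Section Defs.
Variables (R : realType) (N : nat).

Definition dotv (u v : 'rV[R]_N) : R := \sum_(i < N) u ord0 i * v ord0 i.
Definition normv (u : 'rV[R]_N) : R := Num.sqrt (dotv u u).

Definition psub (a b : 'rV[R]_N * R) : 'rV[R]_N * R := (a.1 - b.1, a.2 - b.2).
Definition dotp (a b : 'rV[R]_N * R) : R := dotv a.1 b.1 + a.2 * b.2.
Definition normp (a : 'rV[R]_N * R) : R := Num.sqrt (dotp a a).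

Definition epi (Omega : set 'rV[R]_N) (T : 'rV[R]_N -> R) : set ('rV[R]_N * R) :=
  [set p | Omega p.1 /\ T p.1 <= p.2].

Definition prox_normal (K : set ('rV[R]_N * R)) (z v : 'rV[R]_N * R) : Prop :=
  exists sigma : R, 0 <= sigma /\
    forall w, K w -> dotp v (psub w z) <= sigma * normp (psub w z) ^+ 2.

Definition locally_closed (K : set ('rV[R]_N * R)) : Prop :=
  forall z, K z -> exists r : R, 0 < r /\
    closed [set w | K w /\ normp (psub w z) <= r].

Definition loc_pos_reach (K : set ('rV[R]_N * R)) : Prop :=
  locally_closed K /\
  exists phi : 'rV[R]_N * R -> R,
    {within K, continuous phi} /\ (forall z, K z -> 0 <= phi z) /\
    forall z w v, K z -> K w -> prox_normal K z v ->
      dotp v (psub w z) <= phi z * normp v * normp (psub w z) ^+ 2.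

Definition non_lipschitz_at (Omega : set 'rV[R]_N) (T : 'rV[R]_N -> R)
    (x : 'rV[R]_N) : Prop :=
  exists xs ys : nat -> 'rV[R]_N,
    (forall i, Omega (xs i)) /\ (forall i, Omega (ys i)) /\
    xs @ \oo --> x /\ ys @ \oo --> x /\ (forall i, xs i != ys i) /\
    forall (M : R) (n : nat), exists i : nat, (n <= i)%N /\
      M < `|T (ys i) - T (xs i)| / normv (ys i - xs i).

End Defs.

(* Main.v *)
Require Import Defs.
From HB Require Import structures.
From mathcomp Require Import all_boot all_order all_algebra.
From mathcomp Require Import all_classical all_reals all_analysis.
From mathcomp Require Import ring lra.
Import Order.TTheory GRing.Theory Num.Theory.
Import numFieldNormedType.Exports.
Local Open Scope classical_set_scope.
Local Open Scope ring_scope.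
Set Implicit Arguments. Unset Strict Implicit.


Section Alg.
Variables (R : realType) (N : nat).
Implicit Types (u v w : 'rV[R]_N) (a b c : 'rV[R]_N * R).

Lemma dotvC u v : dotv u v = dotv v u.
Proof. by apply: eq_bigr => i _; rewrite mulrC. Qed.
Lemma dotvDl u v w : dotv (u + v) w = dotv u w + dotv v w.
Proof. by rewrite /dotv -big_split; apply: eq_bigr => i _; rewrite mxE mulrDl. Qed.
Lemma dotvNl u w : dotv (- u) w = - dotv u w.
Proof. by rewrite /dotv -sumrN; apply: eq_bigr => i _; rewrite mxE mulNr. Qed.
Lemma dotvBl u v w : dotv (u - v) w = dotv u w - dotv v w.
Proof. by rewrite dotvDl dotvNl. Qed.
Lemma dotvZl k u w : dotv (k *: u) w = k * dotv u w.
Proof. by rewrite /dotv mulr_sumr; apply: eq_bigr => i _; rewrite mxE mulrA. Qed.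
Lemma dotv0l w : dotv 0 w = 0.
Proof. by rewrite /dotv big1 // => i _; rewrite mxE mul0r. Qed.
Lemma dotv_ge0 u : 0 <= dotv u u.
Proof. by apply: sumr_ge0 => i _; rewrite -expr2 sqr_ge0. Qed.
Lemma dotv_eq0 u : dotv u u = 0 -> u = 0.
Proof.
move=> /eqP; rewrite psumr_eq0; last by move=> i _; rewrite -expr2 sqr_ge0.
move=> /allP H; apply/rowP => i; rewrite mxE.
have := H i (mem_index_enum i); rewrite /= mulf_eq0 orbb => /eqP //.
Qed.
Lemma coord_le_dotv u i : u ord0 i ^+ 2 <= dotv u u.
Proof.
rewrite /dotv (bigD1 i) //= expr2 lerDl.
by apply: sumr_ge0 => j _; rewrite -expr2 sqr_ge0.
Qed.

Definition padd a b : 'rV[R]_N * R := (a.1 + b.1, a.2 + b.2).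
Definition pscale k a : 'rV[R]_N * R := (k *: a.1, k * a.2).

Lemma dotpC a b : dotp a b = dotp b a.
Proof. by rewrite /dotp dotvC mulrC. Qed.
Lemma dotp_addl a b c : dotp (padd a b) c = dotp a c + dotp b c.
Proof. rewrite /dotp /padd /= dotvDl; ring. Qed.
Lemma dotp_subl a b c : dotp (psub a b) c = dotp a c - dotp b c.
Proof. rewrite /dotp /psub /= dotvBl; ring. Qed.
Lemma dotp_addr a b c : dotp c (padd a b) = dotp c a + dotp c b.
Proof. by rewrite dotpC dotp_addl !(dotpC c). Qed.
Lemma dotp_subr a b c : dotp c (psub a b) = dotp c a - dotp c b.
Proof. by rewrite dotpC dotp_subl !(dotpC c). Qed.
Lemma dotp_scalel k a b : dotp (pscale k a) b = k * dotp a b.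
Proof. rewrite /dotp /pscale /= dotvZl; ring. Qed.
Lemma dotp_ge0 a : 0 <= dotp a a.
Proof. by rewrite /dotp addr_ge0 ?dotv_ge0 // -expr2 sqr_ge0. Qed.
Lemma dotp_eq0 a : dotp a a = 0 -> a = (0, 0).
Proof.
case: a => x t; rewrite /dotp /= => /eqP.
rewrite paddr_eq0 ?dotv_ge0 -?expr2 ?sqr_ge0 //.
by case/andP => /eqP/dotv_eq0 -> ; rewrite sqrf_eq0 => /eqP ->.
Qed.

Lemma normp_ge0 a : 0 <= normp a. Proof. exact: sqrtr_ge0. Qed.
Lemma normv_ge0 u : 0 <= normv u. Proof. exact: sqrtr_ge0. Qed.
Lemma normp_sqr a : normp a ^+ 2 = dotp a a.
Proof. by rewrite sqr_sqrtr // dotp_ge0. Qed.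
Lemma normv_sqr u : normv u ^+ 2 = dotv u u.
Proof. by rewrite sqr_sqrtr // dotv_ge0. Qed.
Lemma normp_eq0 a : normp a = 0 -> a = (0, 0).
Proof. by move=> H; apply: dotp_eq0; rewrite -normp_sqr H expr0n. Qed.
Lemma normv_eq0 u : normv u = 0 -> u = 0.
Proof. by move=> H; apply: dotv_eq0; rewrite -normv_sqr H expr0n. Qed.
Lemma normp_pair0 u : normp (u, 0) = normv u.
Proof. by rewrite /normp /dotp /= mulr0 addr0. Qed.

Lemma cs_sqr a b : dotp a b ^+ 2 <= dotp a a * dotp b b.
Proof.
set A := dotp a a; set B := dotp b b; set X := dotp a b.
have H t : 0 <= t ^+ 2 * A - 2 * t * X + B.
  have := dotp_ge0 (psub (pscale t a) b).
  rewrite dotp_subl !dotp_subr !dotp_scalel. rewrite (dotpC b (pscale t a)) dotp_scalel (dotpC a (pscale t a)) dotp_scalel.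
  move=> h; rewrite /A /B /X; lra.
have A0 : 0 <= A by exact: dotp_ge0.
have B0 : 0 <= B by exact: dotp_ge0.
have [A00|Apos] := eqVneq A 0.
  have X0 : X = 0.
    apply/eqP; apply/negPn/negP => Xn.
    have := H ((B + 1) / (2 * X)); rewrite A00 mulr0 add0r.
    have -> : 2 * ((B + 1) / (2 * X)) * X = B + 1.
      by field; rewrite Xn.
    lra.
  by rewrite X0 A00 expr0n mul0r.
have Ap : 0 < A by rewrite lt0r Apos.
have := H (X / A).
have -> : (X / A) ^+ 2 * A - 2 * (X / A) * X + B = B - X ^+ 2 / A.
  by field.
rewrite subr_ge0 ler_pdivrMr // => h. by rewrite mulrC.
Qed.

Lemma cs a b : dotp a b <= normp a * normp b.
Proof.
rewrite /normp -sqrtrM ?dotp_ge0 //.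
apply: le_trans (ler_norm _) _.
rewrite -sqrtr_sqr ler_sqrt ?mulr_ge0 ?dotp_ge0 //; exact: cs_sqr.
Qed.

Lemma normp_triangle a b : normp (padd a b) <= normp a + normp b.
Proof.
have h0 := normp_ge0 a; have h1 := normp_ge0 b.
rewrite -(ger0_norm (addr_ge0 h0 h1)) -sqrtr_sqr /normp.
rewrite ler_sqrt ?sqr_ge0 //.
rewrite dotp_addl !dotp_addr -!/(normp _) sqrrD -!normp_sqr (dotpC b a).
have := cs a b. lra.
Qed.

Lemma dotp_scaler k a b : dotp a (pscale k b) = k * dotp a b.
Proof. by rewrite dotpC dotp_scalel dotpC. Qed.
Lemma dotp_expand a b :
  dotp (psub a b) (psub a b) = dotp a a - 2 * dotp a b + dotp b b.
Proof. rewrite dotp_subl !dotp_subr (dotpC b a); ring. Qed.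

Lemma normp_pair_fst u t : normv u <= normp (u, t).
Proof.
by rewrite /normp /normv /dotp /= ler_sqrt ?lerDl -?expr2 ?sqr_ge0 // addr_ge0 ?dotv_ge0 ?sqr_ge0.
Qed.
Lemma normp_pair_snd u t : `|t| <= normp (u, t).
Proof.
rewrite -sqrtr_sqr /normp /dotp /= ler_sqrt ?lerDr -?expr2 ?dotv_ge0 //.
by rewrite addr_ge0 ?dotv_ge0 ?sqr_ge0.
Qed.
Lemma normp_0t (t : R) : normp ((0 : 'rV[R]_N), t) = `|t|.
Proof. by rewrite /normp /dotp /= dotv0l add0r -expr2 sqrtr_sqr. Qed.
Lemma normp_pair_le u t : normp (u, t) <= normv u + `|t|.
Proof.
have -> : (u, t) = padd (u, 0) (0, t) by rewrite /padd /= addr0 add0r.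
by apply: le_trans (normp_triangle _ _) _; rewrite normp_pair0 normp_0t.
Qed.
Lemma normp_fst a : normv a.1 <= normp a.
Proof. by case: a => u t; exact: normp_pair_fst. Qed.
Lemma normp_snd a : `|a.2| <= normp a.
Proof. by case: a => u t; exact: normp_pair_snd. Qed.

Lemma psub_tri a b c : psub a c = padd (psub a b) (psub b c).
Proof. by rewrite /psub /padd /= !addrA !subrK. Qed.
Lemma normp_tri a b c : normp (psub a c) <= normp (psub a b) + normp (psub b c).
Proof. by rewrite (psub_tri a b c); exact: normp_triangle. Qed.
Lemma dotvNN u : dotv (- u) (- u) = dotv u u.
Proof. by rewrite dotvNl dotvC dotvNl opprK. Qed.
Lemma normp_psubC a b : normp (psub a b) = normp (psub b a).
Proof.
rewrite /normp /dotp /psub /= -(opprB a.1) -(opprB a.2) dotvNN; congr (Num.sqrt (_ + _)).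
by rewrite mulrNN.
Qed.
Lemma normv_subC u w : normv (u - w) = normv (w - u).
Proof. by rewrite /normv -(opprB u) dotvNN. Qed.
Lemma normv_tri u v w : normv (u - w) <= normv (u - v) + normv (v - w).
Proof.
have := normp_tri (u, 0) (v, 0) (w, 0).
by rewrite /psub /= !subrr !normp_pair0.
Qed.
Lemma csv u w : dotv u w <= normv u * normv w.
Proof. by have := cs (u, 0) (w, 0); rewrite /dotp /= mulr0 addr0 !normp_pair0. Qed.
Lemma normp_scale k a : normp (pscale k a) = `|k| * normp a.
Proof.
rewrite /normp dotp_scalel dotp_scaler mulrA -expr2 sqrtrM ?sqr_ge0 //.
by rewrite sqrtr_sqr.
Qed.
Lemma normv_scale k u : normv (k *: u) = `|k| * normv u.
Proof.
by have := normp_scale k (u, 0); rewrite /pscale /= mulr0 !normp_pair0.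
Qed.

Lemma coord_le_normv (u : 'rV[R]_N) i : `|u ord0 i| <= normv u.
Proof.
by rewrite -sqrtr_sqr /normv ler_sqrt ?coord_le_dotv ?dotv_ge0.
Qed.
Lemma ballv (x y : 'rV[R]_N) e : normv (y - x) < e -> ball x e y.
Proof.
move=> h; rewrite -ball_normE /ball_ /=. change (mx_norm (x - y) < e). rewrite mx_normrE.
have e0 : 0 < e by apply: le_lt_trans h; exact: sqrtr_ge0.
elim/big_ind: _ => //; first by move=> a b; rewrite gt_max => -> ->.
move=> [i j] _ /=; rewrite (ord1 i).
apply: le_lt_trans h; apply: le_trans (coord_le_normv _ j).
by rewrite !mxE -normrN opprB.
Qed.
Lemma ballr (x y : R) e : `|y - x| < e -> ball x e y.
Proof. by move=> h; rewrite -ball_normE /ball_ /= -normrN opprB. Qed.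
Lemma ballp (x y : 'rV[R]_N * R) e : normp (psub y x) < e -> ball x e y.
Proof.
move=> h; split => /=.
  by apply: ballv; apply: le_lt_trans h; exact: (normp_fst (psub y x)).
by apply: ballr; apply: le_lt_trans h; exact: (normp_snd (psub y x)).
Qed.

Lemma fst_cont : continuous (fun p : 'rV[R]_N * R => p.1).
Proof. move=> p; exact: cvg_fst. Qed.
Lemma snd_cont : continuous (fun p : 'rV[R]_N * R => p.2).
Proof. move=> p; exact: cvg_snd. Qed.
Lemma dotv_cont (Y : topologicalType) (F G : Y -> 'rV[R]_N) :
  continuous F -> continuous G -> continuous (fun t => dotv (F t) (G t)).
Proof.
move=> cF cG; rewrite /dotv.
apply: (continuous_big (op := +%R)); first exact: add_continuous.
move=> i _ x; apply: continuousM.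
  exact: (continuous_comp (cF x) (@coord_continuous _ _ _ _ _ _)).
exact: (continuous_comp (cG x) (@coord_continuous _ _ _ _ _ _)).
Qed.
Lemma dotp_cont (Y : topologicalType) (F G : Y -> 'rV[R]_N * R) :
  continuous F -> continuous G -> continuous (fun t => dotp (F t) (G t)).
Proof.
move=> cF cG x; apply: cvgD.
  apply: (dotv_cont (F := fun t => (F t).1) (G := fun t => (G t).1)).
    by move=> y; apply: continuous_comp; [exact: cF | exact: fst_cont].
  by move=> y; apply: continuous_comp; [exact: cG | exact: fst_cont].
apply: cvgM.
  by apply: continuous_comp; [exact: cF | exact: snd_cont].
by apply: continuous_comp; [exact: cG | exact: snd_cont].
Qed.
End Alg.
Lemma normp_cont (R : realType) (N : nat) (Y : topologicalType) (F : Y -> 'rV[R]_N * R) :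
  continuous F -> continuous (fun t => normp (F t)).
Proof.
move=> cF x.
have h1 : {for x, continuous (fun t => dotp (F t) (F t))} by exact: dotp_cont.
have h2 : {for dotp (F x) (F x), continuous (@Num.sqrt R)} by exact: sqrt_continuous.
exact: (continuous_comp h1 h2).
Qed.
Lemma normv_cont (R : realType) (N : nat) (Y : topologicalType) (F : Y -> 'rV[R]_N) :
  continuous F -> continuous (fun t => normv (F t)).
Proof.
move=> cF x.
have h1 : {for x, continuous (fun t => dotv (F t) (F t))} by exact: dotv_cont.
have h2 : {for dotv (F x) (F x), continuous (@Num.sqrt R)} by exact: sqrt_continuous.
exact: (continuous_comp h1 h2).
Qed.


Section Gen.
Variables (R : realType) (N : nat).

Lemma nat_gt (X : R) : exists m : nat, X < m%:R.
Proof. by exists (Num.truncn X).+1; exact: truncnS_gt. Qed.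

Lemma L_arch (a b M : R) : (forall m : nat, a <= b + M / (m.+1)%:R) -> a <= b.
Proof.
move=> H; rewrite leNgt; apply/negP => ab.
have [m hm] := nat_gt (M / (a - b)).
have hm' : M / (a - b) < m.+1%:R by apply: lt_le_trans hm _; rewrite ler_nat.
have d0 : 0 < a - b by rewrite subr_gt0.
have := H m.
have m0 : 0 < (m.+1)%:R :> R by rewrite ltr0n.
rewrite ltr_pdivrMr // in hm'.
have : M / (m.+1)%:R < a - b.
  by rewrite ltr_pdivrMr // mulrC.
move=> h1 h2.
have h3 : a - b <= M / (m.+1)%:R by rewrite lerBlDl.
by have := lt_le_trans h1 h3; rewrite ltxx.
Qed.

Lemma eventually_ex (P : nat -> Prop) : (\forall n \near \oo, P n) -> exists m, forall n, (m <= n)%N -> P n.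
Proof. by move=> [m _ h]; exists m => n hn; apply: h. Qed.

Lemma ex_eventually (P : nat -> Prop) m : (forall n, (m <= n)%N -> P n) -> \forall n \near \oo, P n.
Proof. by move=> h; exists m => // n; exact: h. Qed.

Lemma open_ball (A : set 'rV[R]_N) x : open A -> A x ->
  exists2 r, 0 < r & forall y, normv (y - x) < r -> A y.
Proof.
move=> oA Ax.
have /nbhs_ballP[r r0 hr] : nbhs x A by exact: open_nbhs_nbhs.
by exists r => // y hy; apply: hr; exact: ballv.
Qed.
Lemma within_ball (V : pseudoMetricType R) (A : set V) (f : V -> R) x :
  {within A, continuous f} -> A x -> forall e, 0 < e ->
  exists2 d, 0 < d & forall y, A y -> ball x d y -> `|f y - f x| < e.
Proof.
move=> hc Ax e e0.
have h := (subspace_continuousP A f).1 hc x Ax.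
have := h (ball (f x) e) (nbhsx_ballx _ _ e0).
move=> /nbhs_ballP[d d0 hd]; exists d => // y Ay bxy.
have := hd y bxy Ay; rewrite -ball_normE /ball_ /= => hh.
by rewrite -normrN opprB.
Qed.

Lemma box_compact (M : R) : compact ([set v : 'rV[R]_N | forall i, `[-M, M]%classic (v ord0 i)] `*` `[-M, M]%classic).
Proof.
apply: compact_setX; last exact: segment_compact.
exact: (@rV_compact _ _ (fun=> `[-M, M]%classic) (fun _ => @segment_compact _ _ _)).
Qed.
Lemma compact_normp (A : set ('rV[R]_N * R)) M : closed A ->
  (forall a, A a -> normp a <= M) -> compact A.
Proof.
move=> cA hb; have bc := @box_compact M.
apply: (subclosed_compact cA bc).
move=> a /hb h; split => [i|] /=; rewrite in_itv /= -ler_norml.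
  exact: le_trans (coord_le_normv _ _) (le_trans (normp_fst _) h).
exact: le_trans (normp_snd _) h.
Qed.
Lemma cluster_closed (S : set ('rV[R]_N * R)) (u : nat -> 'rV[R]_N * R) :
  compact S -> (forall n, S (u n)) ->
  exists u0, S u0 /\ forall C, closed C -> (exists m, forall n, (m <= n)%N -> C (u n)) -> C u0.
Proof.
move=> cS Su.
have FS : (u @ \oo) S by exists 0%N => // n _; exact: Su.
have [u0 [Su0 cl]] := cS (u @ \oo) _ FS.
exists u0; split => // C cC [m hm].
apply: contrapT => nC.
have FC : (u @ \oo) C by exists m => // n; exact: hm.
have nb : nbhs u0 (~` C).
  by apply: open_nbhs_nbhs; split => //; exact: closed_openC.
by have [w [Cw nCw]] := cl C (~` C) FC nb.
Qed.
End Gen.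


Lemma psub_cont (R : realType) (N : nat) (Y : topologicalType) (F G : Y -> 'rV[R]_N * R) :
  continuous F -> continuous G -> continuous (fun t => psub (F t) (G t)).
Proof.
move=> cF cG x.
have h1 : (fun t => (F t).1 - (G t).1) @ x --> (F x).1 - (G x).1.
  apply: cvgB.
    by apply: continuous_comp; [exact: cF | exact: fst_cont].
  by apply: continuous_comp; [exact: cG | exact: fst_cont].
have h2 : (fun t => (F t).2 - (G t).2) @ x --> (F x).2 - (G x).2.
  apply: cvgB.
    by apply: continuous_comp; [exact: cF | exact: snd_cont].
  by apply: continuous_comp; [exact: cG | exact: snd_cont].
exact: (cvg_pair h1 h2).
Qed.

Lemma normp_shift (R : realType) (N : nat) (w z : 'rV[R]_N * R) :
  normp w <= normp (psub w z) + normp z.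
Proof.
have {1}-> : w = padd (psub w z) z by rewrite /padd /psub /= !subrK; case: w.
exact: normp_triangle.
Qed.

Section Main.
Variables (R : realType) (N : nat) (Omega : set 'rV[R]_N) (T : 'rV[R]_N -> R) (xbar : 'rV[R]_N).
Hypotheses (Oop : open Omega) (Tc : {within Omega, continuous T})
  (Hr : loc_pos_reach (epi Omega T)) (Ox : Omega xbar).
Local Notation K := (epi Omega T).
Local Notation zb := (xbar, T xbar).

Lemma Kzb : K zb.
Proof. by split => //=. Qed.

Lemma normv0 : normv (0 : 'rV[R]_N) = 0.
Proof. by rewrite /normv dotv0l sqrtr0. Qed.

Lemma prox_scale z v k : 0 < k -> prox_normal K z v -> prox_normal K z (pscale k v).
Proof.
move=> k0 [s [s0 hs]]; exists (k * s); split; first by rewrite mulr_ge0 // ltW.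
by move=> w Kw; rewrite dotp_scalel -mulrA ler_pM2l //; exact: hs.
Qed.

Lemma id_cont : continuous (fun a : 'rV[R]_N * R => a).
Proof. by move=> a; exact: cvg_id. Qed.

Lemma closed_dot_le (c : 'rV[R]_N * R) (b : R) : closed [set a | dotp a c <= b].
Proof.
have h : continuous (fun a : 'rV[R]_N * R => dotp a c).
  by apply: (dotp_cont id_cont) => a; exact: cst_continuous.
have cl : closed [set x : R | x <= b] by exact: closed_le.
exact: (preimage_closed (fun x _ => h x) cl).
Qed.

Lemma closed_snd_ge (b : R) : closed [set a : 'rV[R]_N * R | b <= a.2].
Proof. have cl : closed [set x : R | b <= x] by exact: closed_ge.
exact: (preimage_closed (fun x _ => @snd_cont R N x) cl). Qed.

Lemma closed_sphere : closed [set a : 'rV[R]_N * R | normp a = 1].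
Proof. have cl : closed [set x : R | x = 1] by exact: closed_eq.
have h : continuous (fun a : 'rV[R]_N * R => normp a) by exact: (normp_cont id_cont).
exact: (preimage_closed (fun x _ => h x) cl). Qed.

Lemma normp_u (v : 'rV[R]_N * R) : normp v != 0 -> normp (pscale (normp v)^-1 v) = 1.
Proof.
move=> h; rewrite normp_scale ger0_norm ?invr_ge0 ?normp_ge0 // mulVf //.
Qed.

Lemma sq_mono (a b : R) : 0 <= a -> a <= b -> a ^+ 2 <= b ^+ 2.
Proof. move=> a0 ab; rewrite ler_pXn2r // ?nnegrE //; exact: le_trans ab. Qed.

Lemma stepB : ~ (exists zeta : 'rV[R]_N, zeta != 0 /\ prox_normal K zb (zeta, 0)) ->
  exists2 delta : R, 0 < delta & exists2 Kc : R, 0 < Kc &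
    forall z v, K z -> normp (psub z zb) < delta -> prox_normal K z v ->
      normv v.1 <= Kc * (- v.2).
Proof.
move=> nohor.
case: Hr => _ [phi [phic [phi0 reach]]].
have [dphi dphi0 hphi] := within_ball phic Kzb ltr01.
pose Phi := phi zb + 1.
have Phi0 : 0 < Phi by rewrite /Phi ltr_pwDr // phi0 //; exact: Kzb.
have phiB : forall z, K z -> normp (psub z zb) < dphi -> phi z <= Phi.
  move=> z Kz hz; have := hphi z Kz (ballp hz).
  rewrite /Phi => h; have := ler_norm (phi z - phi zb); lra.
apply: contrapT => H.
have H' : forall n : nat, exists zv : ('rV[R]_N * R) * ('rV[R]_N * R),
    [/\ K zv.1, normp (psub zv.1 zb) < dphi / n.+1%:R, prox_normal K zv.1 zv.2 &
      n.+1%:R * (- zv.2.2) < normv zv.2.1].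
  move=> n; apply: contrapT => hn; apply: H.
  exists (dphi / n.+1%:R); first by rewrite divr_gt0 // ltr0n.
  exists n.+1%:R; first by rewrite ltr0n.
  move=> z v Kz hz hv; rewrite leNgt; apply/negP => hlt; apply: hn.
  by exists (z, v); split.
have [f hf] := choice H'.
pose z n := (f n).1; pose v n := (f n).2.
pose u n := pscale (normp (v n))^-1 (v n).
have vn0 n : normp (v n) != 0.
  apply/eqP => /normp_eq0 h0; have [_ _ _] := hf n.
  by rewrite -/(v n) h0 /= normv0 oppr0 mulr0 ltxx.
have un1 n : normp (u n) = 1 by exact: normp_u.
have Kz n : K (z n) by have [] := hf n.
have zn n : normp (psub (z n) zb) < dphi / n.+1%:R by have [] := hf n.
have zphi n : normp (psub (z n) zb) < dphi.
  apply: lt_le_trans (zn n) _; rewrite ler_pdivrMr ?ltr0n //.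
  by rewrite ler_peMr ?(ltW dphi0) // ler1n.
have ureach n w : K w -> dotp (u n) (psub w (z n)) <= Phi * normp (psub w (z n)) ^+ 2.
  move=> Kw.
  have pn : prox_normal K (z n) (u n).
    apply: prox_scale; first by rewrite invr_gt0 lt0r vn0 normp_ge0.
    by have [] := hf n.
  apply: le_trans (reach _ _ _ (Kz n) Kw pn) _.
  rewrite un1 mulr1; apply: ler_wpM2r; first exact: sqr_ge0.
  exact: phiB (Kz n) (zphi n).
have u2 n : n.+1%:R * (- (u n).2) < 1.
  have [_ _ _ h] := hf n; rewrite -/(v n) in h.
  apply: (@lt_le_trans _ _ (normv (u n).1)); last by rewrite -(un1 n) normp_fst.
  rewrite /u /pscale /= normv_scale ger0_norm ?invr_ge0 ?normp_ge0 //.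
  have i0 : 0 < (normp (v n))^-1 by rewrite invr_gt0 lt0r vn0 normp_ge0.
  by rewrite -mulrN mulrCA ltr_pM2l.
have cS : compact [set a : 'rV[R]_N * R | normp a = 1].
  by apply: (compact_normp (M:=1) closed_sphere) => a ->.
have [u0 [Su0 hu0]] := cluster_closed cS un1.
have le_nm n m : (m <= n)%N -> forall c : R, 0 < c -> c / n.+1%:R <= c / m.+1%:R.
  move=> mn c c0; rewrite ler_pM2l // lef_pV2 ?posrE ?ltr0n // ler_nat ltnS //.
have c1 : forall w, K w -> dotp u0 (psub w zb) <= Phi * normp (psub w zb) ^+ 2.
  move=> w Kw; set D := normp (psub w zb).
  have D0 : 0 <= D := normp_ge0 _.
  apply: (L_arch (M := dphi * (Phi * (2 * D + dphi) + 1))) => m.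
  pose e := dphi / m.+1%:R.
  have e0 : 0 < e by rewrite divr_gt0 // ltr0n.
  have edphi : e <= dphi.
    by rewrite /e ler_pdivrMr ?ltr0n // ler_peMr ?(ltW dphi0) // ler1n.
  have : dotp u0 (psub w zb) <= Phi * (D + e) ^+ 2 + e.
    apply: (hu0 [set a | dotp a (psub w zb) <= Phi * (D + e) ^+ 2 + e]).
      exact: closed_dot_le.
    exists m => n mn /=.
    have hn : normp (psub (z n) zb) <= e.
      by apply: ltW; apply: lt_le_trans (zn n) _; exact: le_nm.
    rewrite (psub_tri w (z n) zb) dotp_addr.
    have h1 := ureach n w Kw.
    have h2 : dotp (u n) (psub (z n) zb) <= e.
      by apply: le_trans (cs _ _) _; rewrite un1 mul1r.
    have h3 : normp (psub w (z n)) <= D + e.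
      apply: le_trans (normp_tri w zb (z n)) _.
      by rewrite -/D normp_psubC lerD2l.
    have h4 : Phi * normp (psub w (z n)) ^+ 2 <= Phi * (D + e) ^+ 2.
      by rewrite ler_pM2l // sq_mono // normp_ge0.
    exact: lerD (le_trans h1 h4) h2.
  move=> hc; apply: le_trans hc _.
  have -> : dphi * (Phi * (2 * D + dphi) + 1) / m.+1%:R = e * (Phi * (2 * D + dphi) + 1).
    by rewrite /e mulrAC.
  have hp : 0 <= Phi * e * (dphi - e) by rewrite mulr_ge0 // ?mulr_ge0 ?subr_ge0 // ltW.
  nra.
have c2 : 0 <= u0.2.
  rewrite -oppr_le0; apply: (L_arch (M := 1)) => m.
  have : - (1 / m.+1%:R) <= u0.2.
    apply: (hu0 [set a | - (1 / m.+1%:R) <= a.2]); first exact: closed_snd_ge.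
    exists m => n mn /=.
    have h : - (u n).2 < 1 / n.+1%:R by rewrite ltr_pdivlMr ?ltr0n // mulrC.
    move: (le_nm n m mn 1 ltr01) => hle; rewrite lerNl; exact: ltW (lt_le_trans h hle).
  by rewrite lerNl add0r.
have c3 : u0.2 <= 0.
  apply: (L_arch (M := Phi)) => m.
  have [t t0 tdef] : exists2 t : R, 0 < t & t = 1 / m.+1%:R.
    by exists (1 / m.+1%:R) => //; rewrite divr_gt0 // ltr0n.
  have Kw : K (xbar, T xbar + t) by split => //=; rewrite lerDl ltW.
  have := c1 _ Kw.
  have -> : psub (xbar, T xbar + t) zb = (0, t).
    by rewrite /psub /= subrr (addrC (T xbar)) addrK.
  rewrite normp_0t /dotp /= dotvC dotv0l add0r real_normK ?num_real //.
  rewrite expr2 mulrA ler_pM2r //.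
  by move=> h; rewrite add0r; rewrite tdef mul1r in h.
have u02 : u0.2 = 0 by apply/eqP; rewrite eq_le c3 c2.
have e0 : u0 = (u0.1, 0) by rewrite -u02; case: u0 {Su0 hu0 c1 c2 c3 u02}.
apply: nohor; exists u0.1; split.
  apply/eqP => h.
  have : normv u0.1 = 1 by rewrite -normp_pair0 -e0.
  by rewrite h normv0 => /eqP; rewrite eq_sym oner_eq0.
exists Phi; split; first exact: ltW.
by move=> w Kw; rewrite -e0; exact: c1.
Qed.

Lemma normvN (u : 'rV[R]_N) : normv (- u) = normv u.
Proof. by rewrite /normv dotvNN. Qed.

Lemma stepC : ~ (exists zeta : 'rV[R]_N, zeta != 0 /\ prox_normal K zb (zeta, 0)) ->
  exists2 eta : R, 0 < eta & exists2 C : R, 0 <= C & exists2 A0 : R, 0 <= A0 &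
   forall x y, Omega x -> Omega y -> x != y -> normp (psub (x, T x) zb) < eta ->
     - (A0 * normv (y - x)) - 18 * C * normv (y - x) ^+ 2 - 2 * C * (T y - T x) ^+ 2
       <= T y - T x.
Proof.
move=> nohor.
have [dB dB0 [Kc Kc0 hB]] := stepB nohor.
case: Hr => lc [phi [phic [phi0 reach]]].
have [r0 [r00 clA]] := lc zb Kzb.
have [dphi dphi0 hphi] := within_ball phic Kzb ltr01.
pose Phi := phi zb + 1.
have Phi0 : 0 < Phi by rewrite /Phi ltr_pwDr // phi0 //; exact: Kzb.
have phiB : forall z, K z -> normp (psub z zb) < dphi -> phi z <= Phi.
  move=> z Kz hz; have := hphi z Kz (ballp hz).
  rewrite /Phi => h; have := ler_norm (phi z - phi zb); lra.
pose eta := Num.min (Num.min (r0 / 6) (dB / 4)) (dphi / 4).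
have eta0 : 0 < eta by rewrite /eta !lt_min !divr_gt0.
have : eta <= eta by [].
rewrite {2}/eta !le_min => /andP[/andP[eta_r eta_B] eta_phi].
exists eta => //.
have Kc0' : 0 <= Kc := ltW Kc0.
exists (Phi * (Kc + 1)); first by apply: mulr_ge0; [exact: ltW | exact: addr_ge0].
exists (2 * Kc + 2); first by apply: addr_ge0 => //; apply: mulr_ge0.
move=> x y Ox' Oy xy hx.
set d := normv (y - x).
have d0 : 0 < d.
  rewrite lt0r normv_ge0 andbT; apply/eqP => /normv_eq0 /eqP.
  by rewrite subr_eq0 => /eqP yx; rewrite yx eqxx in xy.
pose eps := Num.min d eta.
have eps0 : 0 < eps by rewrite /eps lt_min d0 eta0.
have : eps <= eps by [].
rewrite {2}/eps le_min => /andP[eps_d eps_eta].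
pose p := (x, T x - eps).
pose A := [set w | K w /\ normp (psub w zb) <= r0].
have Azx : A (x, T x).
  split; first by split.
  by apply: le_trans (ltW hx) _; apply: le_trans eta_r _; lra.
have cA : compact A.
  apply: (compact_normp (M := r0 + normp zb) clA) => w [_ h].
  by apply: le_trans (normp_shift w zb) _; rewrite lerD2r.
have fc : continuous (fun w => normp (psub p w)).
  apply: normp_cont; apply: psub_cont; last exact: id_cont.
  by move=> w; exact: cst_continuous.
have [q qA qmin] := compact_EVT_min (ex_intro _ (x, T x) Azx) cA (continuous_subspaceT fc).
rewrite inE in qA; have [Kq qr] := qA.
pose v := psub p q.
have pzx : normp (psub p (x, T x)) = eps.
  rewrite /psub /= subrr (addrC (T x)) addrK normp_0t normrN gtr0_norm //.
have pq : normp v <= eps.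
  by rewrite -pzx; apply: (qmin (x, T x)); rewrite inE.
have v1 : normv v.1 <= eps by apply: le_trans (normp_fst v) pq.
have v2 : `|v.2| <= eps by apply: le_trans (normp_snd v) pq.
have qz : normp (psub q zb) <= 3 * eta.
  apply: le_trans (normp_tri q p zb) _.
  rewrite normp_psubC -/v.
  have : normp (psub p zb) <= eps + eta.
    apply: le_trans (normp_tri p (x, T x) zb) _; rewrite pzx lerD2l; exact: ltW.
  lra.
have proxq : prox_normal K q v.
  have nv0 : 0 <= normp v := normp_ge0 _.
  pose c := 2 * normp v / r0.
  have c0 : 0 <= c by rewrite /c divr_ge0 ?mulr_ge0 // ltW.
  have cr : c * r0 = 2 * normp v by rewrite /c mulrAC -mulrA mulfV ?mulr1 // gt_eqF.
  exists (1 + c); split; first by rewrite addr_ge0.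
  move=> w Kw.
  have nwq0 : 0 <= normp (psub w q) := normp_ge0 _.
  have S0 := normp_sqr (psub w q).
  have [wr|wr] := leP (normp (psub w zb)) r0.
  - have hm := qmin w; rewrite inE in hm; have {}hm := hm (conj Kw wr).
    have hsq := sq_mono (normp_ge0 _) hm.
    rewrite !normp_sqr in hsq.
    move: hsq; rewrite (_ : psub p w = psub v (psub w q)); last first.
      by rewrite /v /psub /= !opprB !addrA !subrK.
    rewrite (dotp_expand v (psub w q)) -S0 -/v => hsq.
    have : 0 <= c * normp (psub w q) ^+ 2 by rewrite mulr_ge0 // sqr_ge0.
    nra.
  - have hwq : r0 <= 2 * normp (psub w q).
      have := normp_tri w q zb; lra.
    have hcs := cs v (psub w q).
    have h1 : 0 <= c * normp (psub w q) * (2 * normp (psub w q) - r0).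
      by apply: mulr_ge0; [exact: mulr_ge0 | rewrite subr_ge0].
    nra.
have qdB : normp (psub q zb) < dB by apply: le_lt_trans qz _; lra.
have qphi : normp (psub q zb) < dphi by apply: le_lt_trans qz _; lra.
have hBq := hB q v Kq qdB proxq.
pose lam := - v.2.
have v1e : v.1 = x - q.1 by [].
have v2e : v.2 = T x - eps - q.2 by [].
have lam0 : 0 < lam.
  rewrite ltNge; apply/negP => hl.
  have a0 : normv v.1 <= 0.
    by apply: le_trans hBq _; rewrite -/lam mulr_ge0_le0 // ltW.
  have a00 : normv v.1 = 0 by apply/eqP; rewrite eq_le a0 normv_ge0.
  have l0 : lam = 0.
    apply/eqP; rewrite eq_le hl /=.
    have := le_trans (normv_ge0 v.1) hBq; rewrite pmulr_rge0 //.
  move/normv_eq0: a00; rewrite v1e => /eqP; rewrite subr_eq0 => /eqP q1.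
  have q2 : q.2 = T x - eps by move: l0; rewrite /lam v2e; lra.
  case: Kq; rewrite -q1 q2 => _; lra.
have nvl : normp v <= (Kc + 1) * lam.
  have := normp_pair_le v.1 v.2; rewrite -surjective_pairing => h.
  apply: le_trans h _; rewrite -normrN -/lam gtr0_norm // mulrDl mul1r lerD2r; exact: hBq.
pose zy := (y, T y).
have Kzy : K zy by split.
have hr := reach q zy v Kq Kzy proxq.
set W := normp (psub zy q) in hr.
have W0 : 0 <= W := normp_ge0 _.
have phq : phi q <= Phi := phiB q Kq qphi.
have phq0 : 0 <= phi q := phi0 q Kq.
set C := Phi * (Kc + 1).
have hr2 : dotp v (psub zy q) <= C * lam * W ^+ 2.
  apply: le_trans hr _; apply: (ler_wpM2r (sqr_ge0 W)).
  rewrite /C -mulrA; apply: ler_pM => //; exact: normp_ge0.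
have dexp : dotp v (psub zy q) = dotv v.1 (y - q.1) - lam * (T y - q.2).
  by rewrite /dotp /= /lam mulNr opprK.
have hX : - (normv v.1 * normv (y - q.1)) <= dotv v.1 (y - q.1).
  by rewrite lerNl -dotvNl -(normvN v.1); exact: csv.
have hs : normv (y - q.1) <= 2 * d.
  apply: le_trans (normv_tri y x q.1) _; rewrite -/d -v1e; lra.
have hs2 : normv v.1 * normv (y - q.1) <= (Kc * lam) * (2 * d).
  by apply: ler_pM => //; exact: normv_ge0.
have hq2 : T x - 2 * eps <= q.2.
  by move: v2; rewrite ler_norml v2e => /andP[_ h]; lra.
have hW : W <= 3 * d + `|T y - T x|.
  apply: le_trans (normp_tri zy (x, T x) q) _.
  have h1 : normp (psub zy (x, T x)) <= d + `|T y - T x|.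
    exact: normp_pair_le.
  have h2 : normp (psub (x, T x) q) <= 2 * eps.
    apply: le_trans (normp_tri (x, T x) p q) _.
    by rewrite normp_psubC pzx -/v; lra.
  lra.
have key : - (2 * Kc * d) - C * W ^+ 2 <= T y - q.2.
  rewrite -(ler_pM2l lam0).
  have := le_trans hr2 (le_refl _); rewrite dexp => h.
  nra.
have hW2 : W ^+ 2 <= 18 * d ^+ 2 + 2 * (T y - T x) ^+ 2.
  apply: le_trans (sq_mono W0 hW) _.
  rewrite -(real_normK (num_real (T y - T x))).
  have := sqr_ge0 (3 * d - `|T y - T x|); lra.
have C0 : 0 <= C by apply: mulr_ge0; [exact: ltW | exact: addr_ge0].
have hCW : C * W ^+ 2 <= C * (18 * d ^+ 2 + 2 * (T y - T x) ^+ 2) by exact: ler_wpM2l.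
lra.
Qed.

Lemma ev_close (s : nat -> 'rV[R]_N) rho : 0 < rho -> s @ \oo --> xbar ->
  exists m, forall n, (m <= n)%N -> normv (s n - xbar) < rho.
Proof.
move=> rho0 cs.
have gc : continuous (fun y : 'rV[R]_N => normv (y - xbar)).
  apply: normv_cont => y.
  have h1 : (fun z : 'rV[R]_N => z) @ y --> y by exact: cvg_id.
  have h2 : (fun _ : 'rV[R]_N => xbar) @ y --> xbar by exact: cst_continuous.
  exact: (cvgB h1 h2).
have := gc xbar (ball (normv (xbar - xbar)) rho) (nbhsx_ballx _ _ rho0).
rewrite subrr normv0 => nb.
have [m hm] := eventually_ex (P := fun n => ball 0 rho (normv (s n - xbar))) (cs _ nb).
exists m => n /hm.
by rewrite -ball_normE /ball_ /= sub0r normrN => h; apply: le_lt_trans (ler_norm _) h.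
Qed.

Lemma fwd : non_lipschitz_at Omega T xbar ->
  exists zeta : 'rV[R]_N, zeta != 0 /\ prox_normal K zb (zeta, 0).
Proof.
move=> [xs [ys [Oxs [Oys [cx [cy [neq hM]]]]]]].
apply: contrapT => nohor.
have [eta eta0 [C C0 [A0 A00 hC]]] := stepC nohor.
pose e := Num.min (eta / 2) (1 / (8 * (C + 1))).
have C1 : 0 < C + 1 by rewrite ltr_pwDr.
have e0 : 0 < e by rewrite /e lt_min divr_gt0 //= divr_gt0 // mulr_gt0.
have : e <= e by [].
rewrite {2}/e le_min => /andP[e_eta e_C].
have [dT dT0 hT] := within_ball Tc Ox e0.
pose rho := Num.min (Num.min (eta / 2) dT) (1 / 2).
have rho0 : 0 < rho by rewrite /rho !lt_min dT0 !divr_gt0.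
have : rho <= rho by [].
rewrite {2}/rho !le_min => /andP[/andP[rho_eta rho_T] rho_1].
have region : forall y, Omega y -> normv (y - xbar) < rho ->
    normp (psub (y, T y) zb) < eta /\ `|T y - T xbar| < e.
  move=> y Oy hy.
  have hTy : `|T y - T xbar| < e.
    apply: hT => //; apply: ballv; exact: lt_le_trans hy rho_T.
  split => //; apply: le_lt_trans (normp_pair_le _ _) _; lra.
pose B := 2 * (A0 + 18 * C).
have bound : forall x y, Omega x -> Omega y -> x != y ->
    normv (x - xbar) < rho -> normv (y - xbar) < rho ->
    `|T y - T x| / normv (y - x) <= B.
  move=> x y Ox' Oy xy hx hy.
  have [hx1 hx2] := region x Ox' hx.
  have [hy1 hy2] := region y Oy hy.
  set d := normv (y - x).
  have d0 : 0 < d.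
    rewrite lt0r normv_ge0 andbT; apply/eqP => /normv_eq0 /eqP.
    by rewrite subr_eq0 => /eqP yx; rewrite yx eqxx in xy.
  have d1 : d <= 1.
    apply: le_trans (normv_tri y xbar x) _; rewrite (normv_subC xbar x); lra.
  have h1 := hC x y Ox' Oy xy hx1.
  have yx' : y != x by rewrite eq_sym.
  have h2 := hC y x Oy Ox' yx' hy1.
  rewrite (normv_subC x y) -/d in h2.
  set D := T y - T x in h1 h2 *.
  have eD : T x - T y = - D by rewrite /D opprB.
  rewrite eD sqrrN in h2.
  have aD : `|D| < 2 * e.
    have -> : D = (T y - T xbar) - (T x - T xbar) by rewrite /D opprB addrA subrK.
    apply: le_lt_trans (ler_normB _ _) _; lra.
  have aD2 : 4 * (C + 1) * `|D| <= 1.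
    have e8 : e * (8 * (C + 1)) <= 1.
      by move: e_C; rewrite ler_pdivlMr ?mulr_gt0.
    have : 4 * (C + 1) * `|D| <= 4 * (C + 1) * (2 * e).
      by rewrite ler_pM2l ?mulr_gt0 // ltW.
    nra.
  rewrite ler_pdivrMr //.
  have hD2 : D ^+ 2 = `|D| ^+ 2 by rewrite real_normK ?num_real.
  rewrite hD2 in h1 h2.
  have hdd : d ^+ 2 <= d by rewrite expr2 ler_piMr // ltW.
  have aD0 : 0 <= `|D| := normr_ge0 D.
  have hmax : `|D| <= A0 * d + 18 * C * d ^+ 2 + 2 * C * `|D| ^+ 2.
    rewrite -/d in h1.
    case: (real_ge0P (num_real D)) => hD.
      have nD : `|D| = D := ger0_norm hD.
      rewrite nD in h1 h2 *; lra.
    have nD : `|D| = - D := ltr0_norm hD.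
    rewrite nD in h1 h2 *; lra.
  rewrite /B; nra.
have [m1 hm1] := ev_close rho0 cx.
have [m2 hm2] := ev_close rho0 cy.
have [i [hi hBi]] := hM B (maxn m1 m2).
have h1i : (m1 <= i)%N by apply: leq_trans hi; exact: leq_maxl.
have h2i : (m2 <= i)%N by apply: leq_trans hi; exact: leq_maxr.
have := bound (xs i) (ys i) (Oxs i) (Oys i) (neq i) (hm1 i h1i) (hm2 i h2i).
by rewrite leNgt hBi.
Qed.

Lemma bwd : (exists zeta : 'rV[R]_N, zeta != 0 /\ prox_normal K zb (zeta, 0)) ->
  non_lipschitz_at Omega T xbar.
Proof.
move=> [zeta [zn [sig [sig0 hs]]]].
have [r r0 hr] := open_ball Oop Ox.
pose nz := normv zeta.
have nz0 : 0 < nz.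
  rewrite lt0r normv_ge0 andbT; apply/eqP => /normv_eq0 h.
  by rewrite h eqxx in zn.
pose c := r / (2 * nz).
have c0 : 0 < c by rewrite divr_gt0 // mulr_gt0.
pose t (i : nat) := c / i.+1%:R.
have t0 i : 0 < t i by rewrite divr_gt0 // ltr0n.
pose ys i := xbar + t i *: zeta.
have ysx i : ys i - xbar = t i *: zeta by rewrite /ys (addrC xbar) addrK.
have nys i : normv (ys i - xbar) * (2 * i.+1%:R) = r.
  rewrite ysx normv_scale gtr0_norm // -/nz /t /c.
  field; apply/andP; split; first by rewrite gt_eqF.
  by rewrite gt_eqF.
have nys0 i : 0 < normv (ys i - xbar).
  by rewrite ysx normv_scale gtr0_norm // mulr_gt0.
have nysr i : normv (ys i - xbar) < r.
  rewrite -(nys i) ltr_pMr //.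
  have : 1 <= i.+1%:R :> R by rewrite ler1n.
  lra.
exists (fun _ => xbar), ys; split => //; split.
  by move=> i; apply: hr; exact: nysr.
split; first exact: cvg_cst.
split.
  move=> A /nbhs_ballP [e e0 he].
  have [m hm] := nat_gt (r / e).
  apply: (ex_eventually (m := m)) => n mn; apply: he; apply: ballv.
  have hn := nys n.
  have : r / e < n.+1%:R.
    by apply: lt_le_trans hm _; rewrite ler_nat; apply: leqW.
  rewrite ltr_pdivrMr // => h.
  have : normv (ys n - xbar) * (2 * n.+1%:R) < e * (2 * n.+1%:R).
    rewrite hn.
    have : 0 <= e * n.+1%:R by rewrite mulr_ge0 // ltW.
    nra.
  by rewrite ltr_pM2r // mulr_gt0 // ltr0n.
split.
  move=> i; apply/eqP => h.
  by have := nys0 i; rewrite -h subrr normv0 ltxx.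
move=> M n.
pose Q := sig * (1 + M ^+ 2).
have Q0 : 0 <= Q by rewrite mulr_ge0 // addr_ge0 // sqr_ge0.
have [m0 hm0] := nat_gt (Q * r / (2 * nz)).
exists (maxn n m0); split; first exact: leq_maxl.
set i := maxn n m0.
rewrite ltNge; apply/negP => hle.
set s := normv (ys i - xbar) in hle.
have s0 : 0 < s := nys0 i.
set Dl := T (ys i) - T xbar in hle.
rewrite ler_pdivrMr // in hle.
have M0 : 0 <= M.
  by have := le_trans (normr_ge0 Dl) hle; rewrite pmulr_lge0.
have Kw : K (ys i, T (ys i)) by split => //; apply: hr; exact: nysr.
have := hs _ Kw.
have -> : psub (ys i, T (ys i)) zb = (t i *: zeta, Dl) by rewrite /psub /= ysx.
rewrite normp_sqr /dotp /= mul0r addr0 dotvC dotvZl.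
have hs2 : dotv (t i *: zeta) (t i *: zeta) = s ^+ 2 by rewrite -normv_sqr -ysx.
rewrite hs2 => h.
have hsn : t i * dotv zeta zeta = s * nz.
  by rewrite -normv_sqr /s ysx normv_scale gtr0_norm // expr2 mulrA.
rewrite hsn in h.
have hD : Dl * Dl <= M ^+ 2 * s ^+ 2.
  rewrite -expr2 -(real_normK (num_real Dl)) -exprMn; apply: sq_mono => //.
have h3 : s * nz <= Q * s ^+ 2.
  apply: le_trans h _; rewrite /Q.
  have : sig * (s ^+ 2 + Dl * Dl) <= sig * (s ^+ 2 + M ^+ 2 * s ^+ 2).
    by rewrite ler_wpM2l // lerD2l.
  move=> hh; apply: le_trans hh _.
  by rewrite -mulrA mulrDl mul1r.
have h4 : nz <= Q * s.
  by move: h3; rewrite expr2 mulrA [s * nz]mulrC ler_pM2r.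
have hm0' : Q * r / (2 * nz) < i.+1%:R.
  apply: lt_le_trans hm0 _; rewrite ler_nat; apply: leqW; exact: leq_maxr.
rewrite ltr_pdivrMr ?mulr_gt0 // in hm0'.
have := nys i; rewrite -/s => hsr.
have : nz * (2 * i.+1%:R) <= Q * s * (2 * i.+1%:R).
  by rewrite ler_pM2r // mulr_gt0 // ltr0n.
rewrite -mulrA hsr; lra.
Qed.
End Main.

Theorem proposition3p3 (R : realType) (N : nat) (Omega : set 'rV[R]_N)
    (T : 'rV[R]_N -> R) (xbar : 'rV[R]_N) :
  open Omega -> {within Omega, continuous T} ->
  loc_pos_reach (epi Omega T) -> Omega xbar ->
  (non_lipschitz_at Omega T xbar <->
   exists zeta : 'rV[R]_N, zeta != 0 /\
     prox_normal (epi Omega T) (xbar, T xbar) (zeta, 0)).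
Proof.
move=> Oop Tc Hr Ox; split => H.
  by apply: fwd.
by apply: bwd.
Qed.
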